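(* Let $\varphi:U\times U\to V$ be a fully-regular alternating bilinear map. Then $\mathcal{S}_\varphi=\{\varphi(x,-)\mid x\in U\}\subseteq\mathcal{L}(U,V)$ has the column property, i.e. every matrix space representing it in some bases of $U$ and $V$ has the column property.
   Context: $U,V$ finite-dimensional over a field $\mathbb{K}$. $\varphi$ is fully-regular if $V$ is spanned by the values of $\varphi$ and $\varphi(x,-)\neq 0$ for every nonzero $x\in U$ (equivalently $\varphi(-,x)\ne0$, as $\varphi$ is alternating). Matrix spaces are equivalent ($\sim$) if $\mathcal{M}=P\mathcal{M}'Q$ with $P,Q$ invertible. A subspace is defective if none of its matrices has rank equal to its number of columns. $\mathcal{M}\subseteq\mathrm{Mat}_{m,n}(\mathbb{K})$ is $(r,s)$-decomposed ($0\le r\le m$, $1\le s\le n$) if every $M$ is of the form $\begin{bmatrix} ?_{r\times s}& C(M)\\ B(M)&0_{(m-r)\times(n-s)}\end{bmatrix}$, with lower space $B(\mathcal{M})$; $\mathcal{M}$ has the column property if every $(r,s)$-decomposed space equivalent to $\mathcal{M}$ has defective lower space. *)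

(* Defs.v *)
From HB Require Import structures.
From mathcomp Require Import all_boot all_order all_algebra.
Set Implicit Arguments.
Unset Strict Implicit.
Unset Printing Implicit Defensive.
Import GRing.Theory.
Local Open Scope ring_scope.

Section Defs.
Variable K : fieldType.

Definition mxspace (m n : nat) := 'M[K]_(m, n) -> Prop.

Definition mx_equiv m n (M M' : mxspace m n) : Prop :=
  exists (P : 'M[K]_m) (Q : 'M[K]_n),
    [/\ P \in unitmx, Q \in unitmx &
        forall A, M A <-> exists2 B, M' B & A = P *m B *m Q].

(* entry (i,j) of A with nat indices (0 outside the range) *)
Definition mget m n (A : 'M[K]_(m, n)) (i j : nat) : K :=
  if (insub i : option 'I_m) is Some i' then
    if (insub j : option 'I_n) is Some j' then A i' j' else 0
  else 0.

Definition decomposed m n (M : mxspace m n) (r s : nat) : Prop :=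
  forall A, M A -> forall (i : 'I_m) (j : 'I_n), (r <= i)%N -> (s <= j)%N -> A i j = 0.

Definition lower_block m n (r s : nat) (A : 'M[K]_(m, n)) : 'M[K]_(m - r, s) :=
  \matrix_(i < m - r, j < s) mget A (r + i) j.

Definition lower_space m n (M : mxspace m n) (r s : nat) : mxspace (m - r) s :=
  fun B => exists2 A, M A & B = lower_block r s A.

Definition defective p q (N : mxspace p q) : Prop :=
  forall B, N B -> \rank B != q.

Arguments lower_space {m n} M r s.
Arguments lower_block {m n} r s A.

Definition column_property m n (M : mxspace m n) : Prop :=
  forall r s, (r <= m)%N -> (0 < s <= n)%N ->
  forall M' : mxspace m n, mx_equiv M M' -> decomposed M' r s ->
  defective (lower_space M' r s).

Definition alt_bilinear (U V : vectType K) (phi : U -> U -> V) : Prop :=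
  [/\ forall x, linear (phi x), forall y, linear (phi^~ y) & forall x, phi x x = 0].

Definition fully_regular (U V : vectType K) (phi : U -> U -> V) : Prop :=
  (forall W : {vspace V}, (forall x y, phi x y \in W) -> W = fullv) /\
  (forall x, x != 0 -> exists y, phi x y != 0).

(* the matrix space representing S_phi = {phi(x,-)} in bases e of U, f of V:
   column j of the matrix of phi(x,-) holds the f-coordinates of phi(x, e_j) *)
Definition S_mx (U V : vectType K) (phi : U -> U -> V) n m
  (e : n.-tuple U) (f : m.-tuple V) : mxspace m n :=
  fun A => exists x : U, A = \matrix_(i < m, j < n) coord f i (phi x (tnth e j)).

End Defs.

(* Main.v *)
Require Import Defs.
From HB Require Import structures.
From mathcomp Require Import all_boot all_order all_algebra.
Import GRing.Theory.
Local Open Scope ring_scope.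

Lemma lin_add {K : fieldType} {U V : lmodType K} {g : U -> V} :
  linear g -> forall u v, g (u + v) = g u + g v.
Proof. by move=> hg u v; have := hg 1 u v; rewrite !scale1r. Qed.

Lemma lin_0 {K : fieldType} {U V : lmodType K} {g : U -> V} :
  linear g -> g 0 = 0.
Proof.
move=> hg; have := hg 1 0 0; rewrite !scale1r addr0 => h.
by apply: (@addrI _ (g 0)); rewrite -h addr0.
Qed.

Lemma lin_Z {K : fieldType} {U V : lmodType K} {g : U -> V} :
  linear g -> forall a u, g (a *: u) = a *: g u.
Proof. by move=> hg a u; have := hg a u 0; rewrite !addr0 (lin_0 hg) addr0. Qed.

Lemma lin_N {K : fieldType} {U V : lmodType K} {g : U -> V} :
  linear g -> forall u, g (- u) = - g u.
Proof. by move=> hg u; rewrite -scaleN1r (lin_Z hg) scaleN1r. Qed.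

Lemma lin_sum {K : fieldType} {U V : lmodType K} {g : U -> V} {n} (F : 'I_n -> U) :
  linear g -> g (\sum_i F i) = \sum_i g (F i).
Proof. by move=> hg; apply: (big_morph g (lin_add hg) (lin_0 hg)). Qed.

Lemma mgetE (K : fieldType) m n (A : 'M[K]_(m, n)) (i : 'I_m) (j : 'I_n) :
  mget A i j = A i j.
Proof. by rewrite /mget !valK. Qed.

Lemma rank_kernel (K : fieldType) p s (B : 'M[K]_(p, s)) (c : 'cV[K]_s) :
  c != 0 -> B *m c = 0 -> \rank B != s.
Proof.
move=> c0 Bc.
have h : (c^T <= kermx B^T)%MS by apply/sub_kermxP; rewrite -trmx_mul Bc trmx0.
have := mxrankS h; rewrite mxrank_ker (mxrank_tr B) => h1.
apply/eqP => hs; move: h1; rewrite hs subnn leqn0 mxrank_eq0 trmx_eq0.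
by rewrite (negbTE c0).
Qed.

Theorem mainTheorem16 (K : fieldType) (U V : vectType K) (phi : U -> U -> V) :
  alt_bilinear phi -> fully_regular phi ->
  forall (n m : nat) (e : n.-tuple U) (f : m.-tuple V),
    basis_of fullv e -> basis_of fullv f ->
    column_property (S_mx phi e f).
Proof.
move=> [hl hr halt] _ n m e f he _ r s hrm /andP[s0 hsn] M' [P [Q [hP hQ hM]]] hdec.
move=> B [A' hA' ->].
set Amx := fun y : U => \matrix_(i < m, j < n) coord f i (phi y (tnth e j)).
set C := invmx P; set D := invmx Q.
have antis : forall y z, phi y z = - phi z y.
  move=> y z; have := halt (y + z).
  rewrite (lin_add (hr _)) !(lin_add (hl _)) !halt add0r addr0 => /eqP.
  by rewrite addr_eq0 => /eqP.
have dec : forall y (k : 'I_m) (j : 'I_n), (r <= k)%N -> (s <= j)%N ->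
    (C *m Amx y *m D) k j = 0.
  move=> y k j rk sj.
  have [B0 hB0 eB0] : exists2 B0, M' B0 & Amx y = P *m B0 *m Q.
    by apply/hM; exists y.
  rewrite eB0 /C /D !mulmxA mulVmx // mul1mx -mulmxA mulmxV // mulmx1.
  exact: hdec hB0 k j rk sj.
set E := fun v : 'cV[K]_n => \sum_j v j 0 *: tnth e j.
have EA : forall (v w : 'cV[K]_n), E (v + w) = E v + E w.
  by move=> v w; rewrite /E -big_split /=; apply: eq_bigr => j _; rewrite mxE scalerDl.
have E0 : E 0 = 0 by rewrite /E big1 // => j _; rewrite mxE scale0r.
set L := fun (k : 'I_m) (v : V) => \sum_l C k l * coord f l v.
have LN : forall k v, L k (- v) = - L k v.
  move=> k v; rewrite /L -sumrN; apply: eq_bigr => l _.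
  by rewrite linearN mulrN.
have entry : forall y (w : 'cV[K]_n) k,
    (C *m Amx y *m D *m w) k 0 = L k (phi y (E (D *m w))).
  move=> y w k; rewrite -!mulmxA mxE /L; apply: eq_bigr => l _; congr (_ * _).
  rewrite mxE /E (lin_sum _ (hl y)) linear_sum; apply: eq_bigr => j _.
  by rewrite mxE (lin_Z (hl y)) linearZ /= mulrC.
have decW : forall y (w : 'cV[K]_n), (forall j : 'I_n, (j < s)%N -> w j 0 = 0) ->
    forall k : 'I_m, (r <= k)%N -> L k (phi y (E (D *m w))) = 0.
  move=> y w hw k rk; rewrite -entry mxE big1 // => j _.
  case: (ltnP j s) => js; first by rewrite hw // mulr0.
  by rewrite dec // mul0r.
have [x ex] : exists x, P *m A' *m Q = Amx x.
  have : S_mx phi e f (P *m A' *m Q) by apply/hM; exists A'.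
  by case=> x ->; exists x.
have eA' : A' = C *m Amx x *m D by rewrite -ex /C /D !mulmxA mulVmx // mul1mx -mulmxA mulmxV // mulmx1.
set xi : 'cV[K]_n := \col_j coord e j x.
have exi : x = E xi.
  rewrite {1}(coord_basis he (memvf x)) /E; apply: eq_bigr => j _.
  by rewrite mxE (tnth_nth 0).
set a : 'cV[K]_n := Q *m xi.
have Da : D *m a = xi by rewrite /D /a mulKmx.
set a1 : 'cV[K]_n := \col_j (if (j < s)%N then a j 0 else 0).
set a2 : 'cV[K]_n := \col_j (if (j < s)%N then 0 else a j 0).
have a12 : a = a1 + a2.
  by apply/matrixP => i j; rewrite !mxE; case: (_ < _)%N; rewrite ?addr0 ?add0r; rewrite (ord1 j).
set x1 := E (D *m a1); set x2 := E (D *m a2).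
have ex12 : x = x1 + x2 by rewrite exi -Da a12 mulmxDr EA.
have Lx2 : forall y (k : 'I_m), (r <= k)%N -> L k (phi y x2) = 0.
  move=> y k rk; apply: decW => // j js; by rewrite mxE js.
have hrk : forall i : 'I_(m - r), (r + i < m)%N.
  move=> i; have := ltn_ord i; rewrite -(ltn_add2l r) subnKC //.
have Bij : forall (i : 'I_(m - r)) (j : 'I_s),
    lower_block r s A' i j = A' (Ordinal (hrk i)) (widen_ord hsn j).
  move=> i j; rewrite mxE.
  exact (mgetE _ _ _ A' (Ordinal (hrk i)) (widen_ord hsn j)).
case: (eqVneq a1 0) => [a10|a1n0].
  have -> : lower_block r s A' = 0.
    apply/matrixP => i j; rewrite Bij mxE.
    have := entry x (delta_mx (widen_ord hsn j) 0) (Ordinal (hrk i)).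
    rewrite -colE mxE -eA' => ->.
    rewrite ex12 /x1 a10 mulmx0 E0 add0r antis LN (Lx2 _ _) ?oppr0 //=.
    exact: leq_addr.
  by rewrite mxrank0 eq_sym -lt0n.
apply: (@rank_kernel _ _ _ _ (\col_(j < s) a (widen_ord hsn j) 0)).
  apply: contra a1n0 => /eqP c0; apply/eqP/matrixP => j k.
  rewrite !mxE; case: ifP => // js.
  have := congr1 (fun M : 'cV[K]_s => M (Ordinal js) k) c0; rewrite !mxE.
  by have -> : widen_ord hsn (Ordinal js) = j by apply: val_inj.
apply/matrixP => i k; rewrite (ord1 k) [RHS]mxE mxE.
have : L (Ordinal (hrk i)) (phi x x1) = 0.
  rewrite {1}ex12 (lin_add (hr _)) halt add0r antis LN Lx2 ?oppr0 //=.
  exact: leq_addr.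
rewrite -entry -eA' mxE => h; apply: (etrans _ h).
rewrite [RHS](bigID (fun j : 'I_n => (j < s)%N)) /= [X in _ + X]big1 ?addr0; last first.
  by move=> j /negbTE js; rewrite mxE js mulr0.
rewrite (@big_ord_narrow _ _ _ s n (fun j => A' (Ordinal (hrk i)) j * a1 j 0) hsn).
apply: eq_bigr => j _; rewrite Bij !mxE /=.
by have -> : (j < s)%N by [].
Qed.
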